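(* Let $\theta>0$, $\lambda>0$, $\mu>0$, $e\ge 0$. For $\alpha\ge0$, $d\ge0$ let $$\pi(\alpha,d)=(\theta+\mu)\alpha-\frac{\alpha^2}{2}-\frac{\alpha}{\alpha+d}\lambda\alpha\theta-d,\qquad W(\alpha,d)=\pi(\alpha,d)-e\,\frac{\alpha}{\alpha+d}\,\lambda\alpha\theta .$$ Then the deployment component of the joint maximizer of $W$ over $(\alpha,d)$ (first-best deployment) is $$\alpha^{**}_{FB}(\theta)=\max\!\left\{0,\;\begin{cases}\mu+\theta\big(1-(1+e)\lambda\big), & (1+e)\lambda\theta\le 1,\\ \theta+\mu+1-2\sqrt{(1+e)\lambda\theta}, & (1+e)\lambda\theta>1.\end{cases}\right\}$$
   Context: $\alpha$ is AI deployment, $d$ security investment, $\theta$ capability, $\lambda$ breach-loss magnitude, $\mu$ organizational readiness, $e$ the breach externality parameter (total social breach damage is $(1+e)p\cdot L$ with $p=\alpha/(\alpha+d)$ and $L=\lambda\alpha\theta$). Convention $p(0,d)=0$. *)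

(* Defs.v *)
From HB Require Import structures.
From mathcomp Require Import all_boot all_order all_algebra.
From mathcomp Require Import reals.
Set Implicit Arguments. Unset Strict Implicit. Unset Printing Implicit Defensive.
Import Order.TTheory GRing.Theory Num.Theory.
Local Open Scope ring_scope.

Definition breach_prob {R : realType} (alpha d : R) : R :=
  if alpha == 0 then 0 else alpha / (alpha + d).

Definition payoff {R : realType} (theta lambda mu alpha d : R) : R :=
  (theta + mu) * alpha - alpha ^+ 2 / 2
  - breach_prob alpha d * (lambda * alpha * theta) - d.

Definition welfare {R : realType} (theta lambda mu e alpha d : R) : R :=
  payoff theta lambda mu alpha d - e * (breach_prob alpha d * (lambda * alpha * theta)).

Definition is_FB_maximizer {R : realType} (theta lambda mu e alpha d : R) : Prop :=
  0 <= alpha /\ 0 <= d /\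
  forall a' d' : R, 0 <= a' -> 0 <= d' ->
    welfare theta lambda mu e a' d' <= welfare theta lambda mu e alpha d.

Definition alpha_FB {R : realType} (theta lambda mu e : R) : R :=
  Num.max 0
    (if (1 + e) * lambda * theta <= 1
     then mu + theta * (1 - (1 + e) * lambda)
     else theta + mu + 1 - 2 * Num.sqrt ((1 + e) * lambda * theta)).

(* Main.v *)
Require Import Defs.
From HB Require Import structures.
From mathcomp Require Import all_boot all_order all_algebra.
From mathcomp Require Import reals.
From mathcomp Require Import ring lra.
Import Order.TTheory GRing.Theory Num.Theory.
Local Open Scope ring_scope.

Section P.
Context {R : realType}.
Implicit Types (theta lambda mu e a d k c : R).

Lemma W_eq theta lambda mu e a d :
  welfare theta lambda mu e a d =
  (theta + mu) * a - a ^+ 2 / 2 - breach_prob a d * (((1 + e) * lambda * theta) * a) - d.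
Proof. rewrite /welfare /payoff; ring. Qed.

Definition cc theta lambda mu e : R :=
  if (1 + e) * lambda * theta <= 1
  then mu + theta * (1 - (1 + e) * lambda)
  else theta + mu + 1 - 2 * Num.sqrt ((1 + e) * lambda * theta).

Definition dstar theta lambda e a : R :=
  if (1 + e) * lambda * theta <= 1 then 0
  else a * (Num.sqrt ((1 + e) * lambda * theta) - 1).

Lemma upper theta lambda mu e a d : 0 <= a -> 0 <= d ->
  welfare theta lambda mu e a d <= cc theta lambda mu e * a - a ^+ 2 / 2.
Proof.
move=> ha hd; rewrite W_eq /cc /breach_prob.
have Ek : theta * (1 - (1 + e) * lambda) = theta - (1 + e) * lambda * theta by ring.
rewrite Ek.
set k := (1 + e) * lambda * theta.
have [->|a0] := eqVneq a 0.
  rewrite ?eqxx /=; lra.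

have apos : 0 < a by rewrite lt0r a0.
have ad : 0 < a + d by lra.
set t := a / (a + d).
have ht : t * (a + d) = a by rewrite /t divfK // gt_eqF.
case: ifP => hk.
  suff : 0 <= (t * (k * a) + d - k * a) * (a + d).
    rewrite pmulr_lge0 // => h; lra.
  have -> : (t * (k * a) + d - k * a) * (a + d)
     = k * a * (t * (a + d)) + d * (a + d) - k * a * (a + d) by ring.
  rewrite ht.
  have -> : k * a * a + d * (a + d) - k * a * (a + d) = d * (a + d - k * a) by ring.
  apply: mulr_ge0 => //.
  have : k * a <= 1 * a by rewrite ler_pM2r.
  lra.
have k1 : 1 < k by rewrite ltNge hk.
set s := Num.sqrt k.
have hs : s ^+ 2 = k by rewrite sqr_sqrtr //; lra.
suff : 0 <= (t * (k * a) + d - (2 * s - 1) * a) * (a + d).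
  rewrite pmulr_lge0 // => h; lra.
have -> : (t * (k * a) + d - (2 * s - 1) * a) * (a + d)
   = k * a * (t * (a + d)) + d * (a + d) - (2 * s - 1) * a * (a + d) by ring.
rewrite ht -hs.
have -> : s ^+ 2 * a * a + d * (a + d) - (2 * s - 1) * a * (a + d) = (s * a - a - d) ^+ 2 by ring.
exact: sqr_ge0.
Qed.

Lemma dstar_ge0 theta lambda e a : 0 <= a -> 0 <= dstar theta lambda e a.
Proof.
move=> ha; rewrite /dstar; case: ifP => // hk.
have k1 : 1 < (1 + e) * lambda * theta by rewrite ltNge hk.
apply: mulr_ge0 => //; rewrite subr_ge0.
have : Num.sqrt 1 <= Num.sqrt ((1 + e) * lambda * theta) by rewrite ler_sqrt; lra.
by rewrite sqrtr1.
Qed.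

Lemma attain theta lambda mu e a : 0 <= a ->
  welfare theta lambda mu e a (dstar theta lambda e a) = cc theta lambda mu e * a - a ^+ 2 / 2.
Proof.
move=> ha; rewrite W_eq /cc /dstar /breach_prob.
have Ek : theta * (1 - (1 + e) * lambda) = theta - (1 + e) * lambda * theta by ring.
rewrite Ek.
set k := (1 + e) * lambda * theta.
have [->|a0] := eqVneq a 0.
  case: ifP => _ /=; rewrite ?eqxx /=; ring.
have apos : 0 < a by rewrite lt0r a0.
case: ifP => hk.
  rewrite addr0 divff //; ring.
have k1 : 1 < k by rewrite ltNge hk.
set s := Num.sqrt k.
have hs : s ^+ 2 = k by rewrite sqr_sqrtr //; lra.
have s0 : 0 < s by rewrite sqrtr_gt0; lra.
have -> : a + a * (s - 1) = a * s by ring.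
have -> : a / (a * s) = s^-1 by rewrite invfM mulrA divff // mul1r.
rewrite -hs; field; rewrite gt_eqF //.
Qed.

Lemma gmax c a : 0 <= a ->
  c * a - a ^+ 2 / 2 + (a - Num.max 0 c) ^+ 2 / 2 <= c * Num.max 0 c - (Num.max 0 c) ^+ 2 / 2.
Proof.
move=> ha; rewrite /Order.max; case: ifP => hc.
  have := sqr_ge0 (a - c); lra.
rewrite ltNge in hc; move/negbFE: hc => hc; nra.
Qed.

End P.

Theorem proposition6 (R : realType) (theta lambda mu e : R) :
  0 < theta -> 0 < lambda -> 0 < mu -> 0 <= e ->
  (exists d : R, is_FB_maximizer theta lambda mu e (alpha_FB theta lambda mu e) d) /\
  (forall alpha d : R, is_FB_maximizer theta lambda mu e alpha d ->
     alpha = alpha_FB theta lambda mu e).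
Proof.
move=> ht hl hm he.
have Ea : alpha_FB theta lambda mu e = Num.max 0 (cc theta lambda mu e) by [].
set c := cc theta lambda mu e in Ea.
have a0 : 0 <= Num.max 0 c by rewrite le_max lexx.
have Wst : welfare theta lambda mu e (Num.max 0 c) (dstar theta lambda e (Num.max 0 c))
   = c * Num.max 0 c - (Num.max 0 c) ^+ 2 / 2 by rewrite attain.
split.
  exists (dstar theta lambda e (Num.max 0 c)); rewrite Ea; split => //; split.
    exact: dstar_ge0.
  move=> a' d' ha hd; rewrite Wst.
  apply: (le_trans (upper theta lambda mu e _ _ ha hd)).
  apply: le_trans (gmax c _ ha); rewrite lerDl; apply: divr_ge0 => //; exact: sqr_ge0.
move=> al d [ha [hd hmax]]; rewrite Ea.
have h1 := hmax _ _ a0 (dstar_ge0 theta lambda e _ a0).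
rewrite Wst in h1.
have h2 := le_trans h1 (upper theta lambda mu e _ _ ha hd).
have h3 := le_trans (lerD h2 (lexx ((al - Num.max 0 c) ^+ 2 / 2))) (gmax c _ ha).
rewrite -lerBrDl subrr in h3.
have hsq : (al - Num.max 0 c) ^+ 2 <= 0.
  move: h3; rewrite pmulr_lle0 // invr_gt0 // ltr0n.
apply/eqP; rewrite -subr_eq0 -sqrf_eq0 eq_le hsq sqr_ge0 //.
Qed.
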